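(* A regular semigroup is a generalized inverse semigroup if and only if it is isomorphic to a subsemigroup of a $\lambda$-semidirect product $K\rtimes_\lambda T$ of a rectangular band $K$ by an inverse semigroup $T$ (with respect to some action of $T$ on $K$).
   Context: A generalized inverse semigroup is an orthodox semigroup (regular semigroup whose idempotents form a subsemigroup) whose set of idempotents is a normal band ($efge=egfe$ for all idempotents $e,f,g$). A rectangular band is a semigroup satisfying $xx=x$ and $xyz=xz$. Let $K$ be a semigroup and $T$ an inverse semigroup; $T$ acts on $K$ if an antihomomorphism $t\mapsto\varepsilon_t$ from $T$ into the endomorphism monoid of $K$ is given (so $\varepsilon_u\varepsilon_t=\varepsilon_{tu}$); write ${}^t a$ for $a\varepsilon_t$. The $\lambda$-semidirect product $K\rtimes_\lambda T$ is the set $\{(a,t)\in K\times T: {}^{tt^{-1}}a=a\}$ with multiplication $(a,t)(b,u)=({}^{(tu)(tu)^{-1}}a\cdot {}^t b,\ tu)$. *)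

(* Defs.v *)
Set Implicit Arguments.

Section Semigroups.
Variable S : Type.
Variable m : S -> S -> S.

Definition associative_op : Prop := forall x y z, m x (m y z) = m (m x y) z.

Definition idempotent (e : S) : Prop := m e e = e.

Definition regular : Prop := forall a, exists x, m (m a x) a = a.

Definition orthodox : Prop :=
  regular /\ forall e f, idempotent e -> idempotent f -> idempotent (m e f).

Definition idempotents_normal_band : Prop :=
  forall e f g, idempotent e -> idempotent f -> idempotent g ->
    m (m (m e f) g) e = m (m (m e g) f) e.

Definition generalized_inverse : Prop := orthodox /\ idempotents_normal_band.

Definition rectangular_band : Prop :=
  (forall x, m x x = x) /\ (forall x y z, m (m x y) z = m x z).

(* inverse semigroup, presented with its inversion map: inv t is an inverse
   of t (t t' t = t, t' t t' = t') and it is the unique such inverse. *)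
Definition inverse_semigroup_with (inv : S -> S) : Prop :=
  (forall t, m (m t (inv t)) t = t /\ m (m (inv t) t) (inv t) = inv t) /\
  (forall t s, m (m t s) t = t -> m (m s t) s = s -> s = inv t).

End Semigroups.

Section Action.
Variables (K T : Type) (mK : K -> K -> K) (mT : T -> T -> T).

(* t |-> eps_t, each eps_t an endomorphism of K, antihomomorphism into
   End(K) written on the right: eps_u eps_t = eps_{tu}, i.e.
   ^{tu} a = ^t (^u a), where act t a = ^t a = a eps_t. *)
Definition semigroup_action (act : T -> K -> K) : Prop :=
  (forall t a b, act t (mK a b) = mK (act t a) (act t b)) /\
  (forall t u a, act (mT t u) a = act t (act u a)).

Variables (inv : T -> T) (act : T -> K -> K).

Definition lsd_carrier (p : K * T) : Prop :=
  act (mT (snd p) (inv (snd p))) (fst p) = fst p.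

Definition lsd_mul (p q : K * T) : K * T :=
  let tu := mT (snd p) (snd q) in
  (mK (act (mT tu (inv tu)) (fst p)) (act (snd p) (fst q)), tu).

End Action.

(* Main.v *)
Require Import Defs.
From Stdlib Require Import FunctionalExtensionality PropExtensionality ProofIrrelevance IndefiniteDescription.
Set Implicit Arguments.

Ltac pre op P t :=
  lazymatch t with
  | op ?u ?v => let u' := pre op P u in constr:(op u' v)
  | _ => constr:(op P t)
  end.

Ltac mkc A op H Hc :=
  lazymatch type of H with
  | @eq ?T ?l ?r =>
    assert (Hc : forall P : T, ltac:(let a := pre op P l in let b := pre op P r in exact (a = b)));
    [ let P := fresh "P" in let HH := fresh "HH" in
      intro P; pose proof (f_equal (op P) H) as HH; repeat rewrite A in HH; exact HH | ]
  end.

Ltac rwh' A op H := (rewrite H) || (let Hc := fresh "Hc" in mkc A op H Hc; rewrite Hc; clear Hc).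
Ltac rwt' A op t := let Ht := fresh "Ht" in pose proof t as Ht; try unfold idempotent in Ht; repeat rewrite A in Ht; rwh' A op Ht; clear Ht.
Ltac rwtr' A op t := let Ht := fresh "Ht" in pose proof t as Ht; try unfold idempotent in Ht; repeat rewrite A in Ht; symmetry in Ht; rwh' A op Ht; clear Ht.

Ltac getA k := match goal with A : associative_op ?op |- context [?op _ _] => k A op end.
Ltac N := getA ltac:(fun A op => repeat rewrite A).
Ltac NH H := match goal with A : associative_op ?op |- _ => match type of H with context [op _ _] => repeat rewrite A in H end end.
Ltac r t := getA ltac:(fun A op => rwt' A op t).
Ltac rr t := getA ltac:(fun A op => rwtr' A op t).
Ltac via E := transitivity E; [symmetry; N | N].

Definition isinv {S} (m : S -> S -> S) (a z : S) : Prop := m (m a z) a = a /\ m (m z a) z = z.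

Lemma isinv_sym S (m : S -> S -> S) a z : isinv m a z -> isinv m z a.
Proof. intros [H1 H2]; split; assumption. Qed.

Lemma isinv_idl S (m : S -> S -> S) (A : associative_op m) a z : isinv m a z -> idempotent m (m z a).
Proof. intros [H1 H2]; unfold idempotent; N; r H2; reflexivity. Qed.
Lemma isinv_idr S (m : S -> S -> S) (A : associative_op m) a z : isinv m a z -> idempotent m (m a z).
Proof. intros [H1 H2]; unfold idempotent; N; r H1; reflexivity. Qed.

Lemma L2 S (m : S -> S -> S) (A : associative_op m) (nb : idempotents_normal_band m) a b x y :
  isinv m a x -> isinv m b x -> isinv m a y -> isinv m b y.
Proof.
  intros Iax Ibx Iay.
  pose proof (isinv_idl A Iax) as Ixa. pose proof (isinv_idr A Iax) as Iax'.
  pose proof (isinv_idl A Ibx) as Ixb. pose proof (isinv_idr A Ibx) as Ibx'.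
  pose proof (isinv_idl A Iay) as Iya. pose proof (isinv_idr A Iay) as Iay'.
  destruct Iax as [Hax Hxa], Ibx as [Hbx Hxb], Iay as [Hay Hya].
  assert (F1 : m (m x b) (m y a) = m x a).
  { via (m (m (m (m x a) (m x b)) (m y a)) (m x a)).
    - r Hxa; r Hax; reflexivity.
    - r (nb _ _ _ Ixa Ixb Iya). r Hay. r Hxa. r Hxb. reflexivity. }
  assert (F2 : m (m a y) (m b x) = m a x).
  { via (m (m (m (m a x) (m a y)) (m b x)) (m a x)).
    - r Hax; r Hxa; reflexivity.
    - r (nb _ _ _ Iax' Iay' Ibx'). r Hxb. r Hax. r Hay. reflexivity. }
  assert (K : m (m (m (m x b) y) b) x = x).
  { via (m (m (m (m (m x b) (m y a)) y) (m a y)) (m b x)).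
    - r Hya. r Hya. reflexivity.
    - r F2. r F1. r Hay. r Hxa. reflexivity. }
  assert (K2 : m (m (m (m a y) b) y) a = a).
  { via (m (m (m (m (m a y) b) x) b) (m y a)).
    - r Hbx. reflexivity.
    - r F2. r F1. r Hax. reflexivity. }
  split.
  - via (m (m (m (m (m (m b x) b) y) b) x) b).
    + r Hbx. r Hbx. reflexivity.
    + r K. r Hbx. reflexivity.
  - via (m (m (m (m (m (m y a) y) b) y) a) y).
    + r Hya. r Hya. reflexivity.
    + r K2. r Hya. reflexivity.
Qed.


Definition Vs {S} (m : S -> S -> S) (a : S) : S -> Prop := fun z => isinv m a z.

Lemma L2eq S (m : S -> S -> S) (A : associative_op m) (nb : idempotents_normal_band m) a b x :
  isinv m a x -> isinv m b x -> Vs m a = Vs m b.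
Proof.
  intros H1 H2; apply functional_extensionality; intro y; apply propositional_extensionality;
  unfold Vs; split; intro H; [exact (L2 A nb H1 H2 H) | exact (L2 A nb H2 H1 H)].
Qed.

Definition orth {S} (m : S -> S -> S) := forall e f, idempotent m e -> idempotent m f -> idempotent m (m e f).

Lemma L3 S (m : S -> S -> S) (A : associative_op m) (oc : orth m) a a' c c' :
  isinv m a a' -> isinv m c c' -> isinv m (m c a) (m a' c').
Proof.
  intros Ia Ic.
  pose proof (isinv_idl A Ia) as Iaa. pose proof (isinv_idr A Ia) as Iaa'.
  pose proof (isinv_idl A Ic) as Icc. pose proof (isinv_idr A Ic) as Icc'.
  pose proof (oc _ _ Icc Iaa') as Q. pose proof (oc _ _ Iaa' Icc) as Pq.
  unfold idempotent in Q, Pq.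
  destruct Ia as [Ha1 Ha2], Ic as [Hc1 Hc2].
  split.
  - via (m (m (m (m c (m c' c)) (m a a')) (m (m c' c) (m a a'))) a).
    + r Hc1. r Ha1. reflexivity.
    + r Q. r Hc1. r Ha1. reflexivity.
  - via (m (m (m (m a' (m a a')) (m c' c)) (m (m a a') (m c' c))) c').
    + r Ha2. r Hc2. reflexivity.
    + r Pq. r Ha2. r Hc2. reflexivity.
Qed.

Lemma reg_inv S (m : S -> S -> S) (A : associative_op m) : regular m -> forall a, exists z, isinv m a z.
Proof.
  intros R a. destruct (R a) as [x H]. exists (m (m x a) x). split.
  - N. r H. r H. reflexivity.
  - N. r H. r H. reflexivity.
Qed.

Lemma congL S (m : S -> S -> S) (A : associative_op m) (nb : idempotents_normal_band m) (oc : orth m)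
  (R : regular m) a b c : Vs m a = Vs m b -> Vs m (m c a) = Vs m (m c b).
Proof.
  intro E. destruct (reg_inv A R a) as [a' Ha]. destruct (reg_inv A R c) as [c' Hc].
  assert (Hb : isinv m b a') by (change (Vs m b a'); rewrite <- E; exact Ha).
  apply L2eq with (x := m a' c'); auto; apply L3; auto.
Qed.

Lemma congR S (m : S -> S -> S) (A : associative_op m) (nb : idempotents_normal_band m) (oc : orth m)
  (R : regular m) a b c : Vs m a = Vs m b -> Vs m (m a c) = Vs m (m b c).
Proof.
  intro E. destruct (reg_inv A R a) as [a' Ha]. destruct (reg_inv A R c) as [c' Hc].
  assert (Hb : isinv m b a') by (change (Vs m b a'); rewrite <- E; exact Ha).
  apply L2eq with (x := m c' a'); auto; apply L3; auto.
Qed.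

Lemma lallement S (m : S -> S -> S) (A : associative_op m) (nb : idempotents_normal_band m) (oc : orth m)
  (R : regular m) u : Vs m (m u u) = Vs m u -> exists e, idempotent m e /\ Vs m e = Vs m u.
Proof.
  intro E. destruct (reg_inv A R (m u u)) as [x [Hx1 Hx2]].
  exists (m (m u x) u). split.
  - unfold idempotent. N. NH Hx2. r Hx2. reflexivity.
  - rewrite <- E.
    assert (E1 : Vs m (m (m u x) u) = Vs m (m (m (m u u) x) u)).
    { apply congR; auto. apply congR; auto. }
    rewrite E1.
    assert (E2 : Vs m (m (m (m u u) x) u) = Vs m (m (m (m u u) x) (m u u))).
    { apply congL; auto. }
    rewrite E2, Hx1. reflexivity.
Qed.

Lemma LemG_core S (m : S -> S -> S) (A : associative_op m) (nb : idempotents_normal_band m) (oc : orth m)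
  g h e f : idempotent m g -> idempotent m h -> idempotent m e -> idempotent m f ->
  m (m h g) h = h -> m (m g h) g = g -> m (m e g) f = m (m e h) f.
Proof.
  intros Ig Ih Ie If Hhgh Hghg.
  assert (SA : forall g0, idempotent m g0 -> m (m e g0) f = m (m (m (m (m e g0) e) f) g0) f).
  { intros g0 I0. transitivity (m (m (m e g0) f) (m (m e g0) f)).
    - symmetry. apply (oc _ _ (oc _ _ Ie I0) If).
    - N. r (nb _ _ _ I0 If Ie). reflexivity. }
  assert (EB : forall e0, idempotent m e0 -> m (m e0 g) e0 = m (m e0 h) e0).
  { intros e0 I0. transitivity (m (m (m e0 g) h) e0).
    - via (m (m (m (m e0 g) h) g) e0).
      + r Hghg. reflexivity.
      + r (nb _ _ _ I0 Ig (oc _ _ Ih Ig)). unfold idempotent in Ig. r Ig. r (nb _ _ _ I0 Ih Ig). reflexivity.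
    - symmetry. via (m (m (m (m e0 h) g) h) e0).
      + r Hhgh. reflexivity.
      + r (nb _ _ _ I0 Ih (oc _ _ Ig Ih)). unfold idempotent in Ih. r Ih. reflexivity. }
  rewrite (SA g Ig), (SA h Ih). N. r (EB e Ie). r (EB f If). reflexivity.
Qed.

Lemma LemG S (m : S -> S -> S) (A : associative_op m) (nb : idempotents_normal_band m) (oc : orth m)
  (R : regular m) g h : idempotent m g -> idempotent m h -> Vs m g = Vs m h ->
  forall X Y, m (m X g) Y = m (m X h) Y.
Proof.
  intros Ig Ih E X Y.
  assert (Igg : isinv m g g) by (unfold idempotent in Ig; split; rewrite !Ig; reflexivity).
  assert (Ihg : isinv m h g) by (change (Vs m h g); rewrite <- E; exact Igg).
  destruct Ihg as [Hhgh Hghg].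
  destruct (reg_inv A R X) as [X' HX]. destruct (reg_inv A R Y) as [Y' HY].
  pose proof (isinv_idl A HX) as IX. pose proof (isinv_idr A HY) as IY.
  destruct HX as [HX1 _], HY as [HY1 _].
  via (m (m (m (m X (m X' X)) g) (m Y Y')) Y).
  - r HX1. r HY1. reflexivity.
  - r (LemG_core A nb oc Ig Ih IX IY Hhgh Hghg). r HX1. r HY1. reflexivity.
Qed.

Lemma G_unique T (mT : T -> T -> T) (inv : T -> T) (AT : associative_op mT)
  (I1 : forall t, mT (mT t (inv t)) t = t /\ mT (mT (inv t) t) (inv t) = inv t)
  (C : forall p q, idempotent mT p -> idempotent mT q -> mT p q = mT q p) :
  forall t s, mT (mT t s) t = t -> mT (mT s t) s = s -> s = inv t.
Proof.
  intros t s H1 H2. destruct (I1 t) as [J1 J2].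
  assert (Ist : idempotent mT (mT s t)) by (unfold idempotent; N; r H2; reflexivity).
  assert (Its : idempotent mT (mT t s)) by (unfold idempotent; N; r H1; reflexivity).
  assert (Itt : idempotent mT (mT (inv t) t)) by (unfold idempotent; N; r J2; reflexivity).
  assert (Itt' : idempotent mT (mT t (inv t))) by (unfold idempotent; N; r J1; reflexivity).
  transitivity (mT (mT (inv t) t) s).
  - via (mT (mT (mT (mT s t) (inv t)) t) s).
    + r J1. r H2. reflexivity.
    + r (C _ _ Ist Itt). r H1. reflexivity.
  - symmetry. via (mT (mT (mT (mT (inv t) t) s) t) (inv t)).
    + r H1. r J2. reflexivity.
    + r (C _ _ Its Itt'). r J2. reflexivity.
Qed.

Lemma G_idem_prod T (mT : T -> T -> T) (inv : T -> T) (AT : associative_op mT)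
  (IT : inverse_semigroup_with mT inv) p q :
  idempotent mT p -> idempotent mT q -> idempotent mT (mT p q).
Proof.
  intros Ip Iq. destruct IT as [I1 I2]. unfold idempotent in Ip, Iq.
  set (x := inv (mT p q)). destruct (I1 (mT p q)) as [Hx1 Hx2]. fold x in Hx1, Hx2.
  NH Hx1. NH Hx2.
  assert (Ey : mT (mT q x) p = x).
  { apply I2.
    - N. r Iq. r Ip. exact Hx1.
    - N. r Ip. r Iq. r Hx2. reflexivity. }
  assert (Ix : mT x x = x).
  { rewrite <- Ey at 1 2. N. r Hx2. N. exact Ey. }
  assert (E1 : mT p q = inv x) by (apply I2; [N; exact Hx2 | N; exact Hx1]).
  assert (E2 : x = inv x) by (apply I2; rewrite !Ix; reflexivity).
  unfold idempotent. rewrite E1, <- E2. exact Ix.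
Qed.

Lemma G_comm T (mT : T -> T -> T) (inv : T -> T) (AT : associative_op mT)
  (IT : inverse_semigroup_with mT inv) p q :
  idempotent mT p -> idempotent mT q -> mT p q = mT q p.
Proof.
  intros Ip Iq. pose proof (G_idem_prod AT IT Ip Iq) as Ipq. pose proof (G_idem_prod AT IT Iq Ip) as Iqp.
  destruct IT as [I1 I2]. unfold idempotent in *.
  transitivity (inv (mT p q)).
  - apply I2; rewrite !Ipq; reflexivity.
  - symmetry; apply I2.
    + N. r Ip. r Iq. r Ipq. reflexivity.
    + N. r Iq. r Ip. r Iqp. reflexivity.
Qed.

Lemma G_inv_inv T (mT : T -> T -> T) (inv : T -> T) (IT : inverse_semigroup_with mT inv) t :
  inv (inv t) = t.
Proof. destruct IT as [I1 I2]. symmetry. apply I2; apply I1. Qed.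

Lemma G_inv_idem T (mT : T -> T -> T) (inv : T -> T) (IT : inverse_semigroup_with mT inv) p :
  idempotent mT p -> inv p = p.
Proof. intro Ip. unfold idempotent in Ip. destruct IT as [I1 I2]. symmetry. apply I2; rewrite !Ip; reflexivity. Qed.

Lemma G_idem_tt T (mT : T -> T -> T) (inv : T -> T) (AT : associative_op mT) (IT : inverse_semigroup_with mT inv) t :
  idempotent mT (mT t (inv t)) /\ idempotent mT (mT (inv t) t).
Proof. destruct IT as [I1 I2]. destruct (I1 t) as [J1 J2]. unfold idempotent; split; N; [r J1 | r J2]; reflexivity. Qed.

Lemma G_inv_mul T (mT : T -> T -> T) (inv : T -> T) (AT : associative_op mT) (IT : inverse_semigroup_with mT inv) t u :
  inv (mT t u) = mT (inv u) (inv t).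
Proof.
  pose proof (G_idem_tt AT IT t) as [It1 It2]. pose proof (G_idem_tt AT IT u) as [Iu1 Iu2].
  pose proof (G_comm AT IT Iu1 It2) as C.
  destruct IT as [I1 I2]. destruct (I1 t) as [J1 J2]. destruct (I1 u) as [K1 K2].
  symmetry. apply I2.
  - N. r C. r J1. r K1. reflexivity.
  - N. rr C. r J2. r K2. reflexivity.
Qed.


Definition Tt S (m : S -> S -> S) := {P : S -> Prop | exists a, P = Vs m a}.
Definition cls S (m : S -> S -> S) (a : S) : Tt m := exist _ (Vs m a) (ex_intro _ a eq_refl).
Definition rep S (m : S -> S -> S) (t : Tt m) : S :=
  proj1_sig (constructive_indefinite_description _ (proj2_sig t)).
Lemma rep_spec S (m : S -> S -> S) (t : Tt m) : proj1_sig t = Vs m (rep t).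
Proof. unfold rep. destruct (constructive_indefinite_description _ _) as [a Ha]. exact Ha. Qed.
Lemma Tt_eq S (m : S -> S -> S) (t u : Tt m) : proj1_sig t = proj1_sig u -> t = u.
Proof. destruct t as [P p], u as [Q q]; simpl; intros ->. f_equal. apply proof_irrelevance. Qed.
Lemma cls_rep S (m : S -> S -> S) (t : Tt m) : cls m (rep t) = t.
Proof. apply Tt_eq. simpl. symmetry. apply rep_spec. Qed.
Lemma cls_eq S (m : S -> S -> S) a b : Vs m a = Vs m b -> cls m a = cls m b.
Proof. intro E. apply Tt_eq. exact E. Qed.
Lemma cls_eq' S (m : S -> S -> S) a b : cls m a = cls m b -> Vs m a = Vs m b.
Proof. intro E. exact (f_equal (@proj1_sig _ _) E). Qed.
Lemma rep_cls S (m : S -> S -> S) a : Vs m (rep (cls m a)) = Vs m a.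
Proof. rewrite <- rep_spec. reflexivity. Qed.

Definition mTt S (m : S -> S -> S) (t u : Tt m) : Tt m := cls m (m (rep t) (rep u)).
Definition invTt S (m : S -> S -> S) (star : S -> S) (t : Tt m) : Tt m := cls m (star (rep t)).

Lemma mT_cls S (m : S -> S -> S) (A : associative_op m) (nb : idempotents_normal_band m) (oc : orth m)
  (R : regular m) a b : mTt (cls m a) (cls m b) = cls m (m a b).
Proof.
  unfold mTt. apply cls_eq. rewrite (congR A nb oc R _ (rep_cls m a)). apply congL; auto. apply rep_cls.
Qed.

Lemma inv_cls S (m : S -> S -> S) (A : associative_op m) (nb : idempotents_normal_band m)
  (star : S -> S) (hs : forall a, isinv m a (star a)) a : invTt star (cls m a) = cls m (star a).
Proof.
  unfold invTt. apply cls_eq. apply L2eq with (x := a); auto.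
  - apply isinv_sym. change (Vs m a (star (rep (cls m a)))). rewrite <- rep_cls. apply hs.
  - apply isinv_sym, hs.
Qed.

Lemma cls_surj S (m : S -> S -> S) (t : Tt m) : exists a, t = cls m a.
Proof. exists (rep t). symmetry. apply cls_rep. Qed.

Lemma Tt_assoc S (m : S -> S -> S) (A : associative_op m) (nb : idempotents_normal_band m) (oc : orth m)
  (R : regular m) : associative_op (@mTt S m).
Proof.
  intros t u v. destruct (cls_surj t) as [a ->], (cls_surj u) as [b ->], (cls_surj v) as [c ->].
  rewrite !mT_cls by auto. rewrite A. reflexivity.
Qed.

Lemma Tt_inverse S (m : S -> S -> S) (A : associative_op m) (nb : idempotents_normal_band m) (oc : orth m)
  (R : regular m) (star : S -> S) (hs : forall a, isinv m a (star a)) :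
  inverse_semigroup_with (@mTt S m) ((@invTt S m star)).
Proof.
  assert (I1 : forall t, mTt (mTt t ((@invTt S m star) t)) t = t /\ mTt (mTt ((@invTt S m star) t) t) ((@invTt S m star) t) = (@invTt S m star) t).
  { intro t. destruct (cls_surj t) as [a ->]. rewrite !inv_cls by auto. rewrite !mT_cls by auto.
    destruct (hs a) as [H1 H2]. rewrite H1, H2. split; reflexivity. }
  split; [exact I1|].
  apply G_unique; auto. apply Tt_assoc; auto.
  intros p q Ip Iq.
  assert (Lift : forall p, idempotent (@mTt S m) p -> exists e, idempotent m e /\ p = cls m e).
  { intros p0 I0. destruct (cls_surj p0) as [a ->]. unfold idempotent in I0.
    rewrite mT_cls in I0 by auto. apply cls_eq' in I0.
    destruct (lallement A nb oc R I0) as [e [Ie Ee]]. exists e. split; auto. apply cls_eq. auto. }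
  destruct (Lift p Ip) as [e [Ie ->]], (Lift q Iq) as [f [If ->]].
  rewrite !mT_cls by auto. apply cls_eq. apply L2eq with (x := m f e); auto.
  - pose proof (oc _ _ Ie If) as Ief. unfold idempotent in *. split.
    + N. r If. r Ie. r Ief. reflexivity.
    + N. r Ie. r If. NH Ief. r (oc _ _ If Ie). reflexivity.
  - pose proof (oc _ _ If Ie) as Ife. unfold idempotent in *. split; N; r Ife; r Ife; reflexivity.
Qed.

Definition XR S (m : S -> S -> S) := {F : S -> S | exists e : S, F = m e}.
Definition XL S (m : S -> S -> S) := {G : S -> S | exists e : S, G = fun k => m k e}.

Lemma actXR_pf S (m : S -> S -> S) (A : associative_op m) g (F : XR m) :
  exists e, (fun k => proj1_sig F (m g k)) = m e.
Proof. destruct F as [F [e ->]]. exists (m e g). simpl. apply functional_extensionality; intro k. apply A. Qed.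
Lemma actXL_pf S (m : S -> S -> S) (A : associative_op m) g (G : XL m) :
  exists e, (fun k => proj1_sig G (m k g)) = fun k => m k e.
Proof. destruct G as [G [e ->]]. exists (m g e). simpl. apply functional_extensionality; intro k. symmetry; apply A. Qed.

Definition actXR S (m : S -> S -> S) (A : associative_op m) g (F : XR m) : XR m :=
  exist _ (fun k => proj1_sig F (m g k)) (actXR_pf A g F).
Definition actXL S (m : S -> S -> S) (A : associative_op m) g (G : XL m) : XL m :=
  exist _ (fun k => proj1_sig G (m k g)) (actXL_pf A g G).

Lemma XR_eq S (m : S -> S -> S) (F G : XR m) : proj1_sig F = proj1_sig G -> F = G.
Proof. destruct F as [F p], G as [G q]; simpl; intros ->. f_equal. apply proof_irrelevance. Qed.
Lemma XL_eq S (m : S -> S -> S) (F G : XL m) : proj1_sig F = proj1_sig G -> F = G.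
Proof. destruct F as [F p], G as [G q]; simpl; intros ->. f_equal. apply proof_irrelevance. Qed.

Definition Rrep S (m : S -> S -> S) e : XR m := exist _ (m e) (ex_intro _ e eq_refl).
Definition Lrep S (m : S -> S -> S) e : XL m := exist _ (fun k => m k e) (ex_intro (fun e' => (fun k => m k e) = fun k => m k e') e eq_refl).

Definition gT S (m : S -> S -> S) (star : S -> S) (v : Tt m) : S := m (star (rep v)) (rep v).

Definition actA S (m : S -> S -> S) (A : associative_op m) (star : S -> S) (t : Tt m) (a : Tt m * XR m) : Tt m * XR m :=
  (mTt t (fst a), actXR A (gT star (mTt t (fst a))) (snd a)).
Definition actB S (m : S -> S -> S) (A : associative_op m) (star : S -> S) (t : Tt m) (b : Tt m * XL m) : Tt m * XL m :=
  (mTt t (fst b), actXL A (gT star (mTt t (fst b))) (snd b)).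
Definition actK S (m : S -> S -> S) (A : associative_op m) (star : S -> S) (t : Tt m)
  (p : (Tt m * XR m) * (Tt m * XL m)) := (actA A star t (fst p), actB A star t (snd p)).
Definition mK {X Y : Type} (p q : X * Y) : X * Y := (fst p, snd q).
Definition fmap S (m : S -> S -> S) (star : S -> S) (x : S) : ((Tt m * XR m) * (Tt m * XL m)) * Tt m :=
  ((mTt (cls m x) (invTt star (cls m x)), Rrep m (m x (star x))), (cls m x, Lrep m (m (star x) x)), cls m x).

Lemma gT_cls S (m : S -> S -> S) (A : associative_op m) (nb : idempotents_normal_band m) (oc : orth m)
  (R : regular m) (star : S -> S) (v : Tt m) : cls m (gT star v) = mTt (invTt star v) v.
Proof. unfold gT, invTt. rewrite <- mT_cls by auto. rewrite (cls_rep v). reflexivity. Qed.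

Lemma gT_idem S (m : S -> S -> S) (A : associative_op m) (star : S -> S) (hs : forall a, isinv m a (star a)) (v : Tt m) :
  idempotent m (gT star v).
Proof. unfold gT. apply (isinv_idl A (hs _)). Qed.

Lemma LemG' S (m : S -> S -> S) (A : associative_op m) (nb : idempotents_normal_band m) (oc : orth m)
  (R : regular m) g h : idempotent m g -> idempotent m h -> cls m g = cls m h ->
  forall X Y, m (m X g) Y = m (m X h) Y.
Proof. intros Ig Ih E. apply LemG; auto. apply cls_eq'; auto. Qed.

Lemma TL1 T (mT : T -> T -> T) (inv : T -> T) (AT : associative_op mT) (IT : inverse_semigroup_with mT inv) t v :
  mT (mT (inv v) v) (mT (inv (mT t v)) (mT t v)) = mT (inv (mT t v)) (mT t v).
Proof.
  rewrite (G_inv_mul AT IT). destruct IT as [I1 I2]. destruct (I1 v) as [_ K2]. N. r K2. reflexivity.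
Qed.
Lemma TL2 T (mT : T -> T -> T) (inv : T -> T) (AT : associative_op mT) (IT : inverse_semigroup_with mT inv) t v :
  mT (mT (inv (mT t v)) (mT t v)) (mT (inv v) v) = mT (inv (mT t v)) (mT t v).
Proof.
  rewrite (G_comm AT IT). apply TL1; auto. apply G_idem_tt; auto. apply G_idem_tt; auto.
Qed.
Lemma TL3 T (mT : T -> T -> T) (inv : T -> T) (AT : associative_op mT) (IT : inverse_semigroup_with mT inv) t u :
  mT (mT (mT t u) (inv (mT t u))) (mT t (inv t)) = mT (mT t u) (inv (mT t u)).
Proof.
  rewrite (G_inv_mul AT IT). destruct IT as [I1 I2]. destruct (I1 t) as [_ K2]. N. r K2. reflexivity.
Qed.

Lemma forward S (m : S -> S -> S) (A : associative_op m) (nb : idempotents_normal_band m) (oc : orth m)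
  (R : regular m) (star : S -> S) (hs : forall a, isinv m a (star a)) :
  exists (K T : Type) (mK0 : K -> K -> K) (mT : T -> T -> T)
         (inv : T -> T) (act : T -> K -> K),
    associative_op mK0 /\ rectangular_band mK0 /\
    associative_op mT /\ inverse_semigroup_with mT inv /\
    semigroup_action mK0 mT act /\
    exists f : S -> K * T,
      (forall x y, f x = f y -> x = y) /\
      (forall x, lsd_carrier mT inv act (f x)) /\
      (forall x y, f (m x y) = lsd_mul mK0 mT inv act (f x) (f y)).
Proof.
  pose proof (Tt_assoc A nb oc R) as AT.
  pose proof (Tt_inverse A nb oc R star hs) as IT.
  exists ((Tt m * XR m) * (Tt m * XL m))%type, (Tt m), mK, (@mTt S m), (invTt star), (actK A star).
  split; [intros x y z; reflexivity|].
  split; [split; [intros [a b]; reflexivity | intros; reflexivity]|].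
  split; [exact AT|]. split; [exact IT|].
  split.
  { split; [intros; reflexivity|].
    intros t u [[s F] [s' G]]. unfold actK, actA, actB; simpl. f_equal; f_equal.
    - symmetry; apply AT.
    - apply XR_eq. destruct F as [F [e ->]]. simpl. apply functional_extensionality; intro k.
      set (w := mTt (mTt t u) s). set (v := mTt u s).
      assert (Hw : w = mTt t v) by (unfold w, v; symmetry; apply AT). rewrite <- Hw.
      pose proof (gT_idem A star hs v) as Iv. pose proof (gT_idem A star hs w) as Iw.
      assert (E : cls m (m (gT star v) (gT star w)) = cls m (gT star w)).
      { rewrite <- mT_cls by auto. rewrite !gT_cls by auto. rewrite Hw. apply TL1; auto. }
      symmetry. N. r (LemG' A nb oc R (oc _ _ Iv Iw) Iw E e k). reflexivity.
    - symmetry; apply AT.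
    - apply XL_eq. destruct G as [G [e ->]]. simpl. apply functional_extensionality; intro k.
      set (w := mTt (mTt t u) s'). set (v := mTt u s').
      assert (Hw : w = mTt t v) by (unfold w, v; symmetry; apply AT). rewrite <- Hw.
      pose proof (gT_idem A star hs v) as Iv. pose proof (gT_idem A star hs w) as Iw.
      assert (E : cls m (m (gT star w) (gT star v)) = cls m (gT star w)).
      { rewrite <- mT_cls by auto. rewrite !gT_cls by auto. rewrite Hw. apply TL2; auto. }
      symmetry. N. r (LemG' A nb oc R (oc _ _ Iw Iv) Iw E k e). reflexivity. }
  exists (@fmap S m star).
  split; [|split].
  -
    intros x y H. unfold fmap in H. pose proof (f_equal snd H) as H5. simpl in H5.
    pose proof (f_equal (fun p => proj1_sig (snd (fst (fst p)))) H) as H2.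
    pose proof (f_equal (fun p => proj1_sig (snd (snd (fst p)))) H) as H4. simpl in H2, H4.
    apply cls_eq' in H5.
    assert (Hy : isinv m y (star x)) by (change (Vs m y (star x)); rewrite <- H5; apply hs).
    destruct Hy as [Hy1 Hy2]. destruct (hs x) as [Hx1 Hx2]. destruct (hs y) as [Hz1 Hz2].
    assert (R1 : m x (star x) = m y (star x)).
    { pose proof (f_equal (fun F => F (m y (star x))) H2) as Q. simpl in Q. NH Q.
      via (m (m (m x (star x)) y) (star x)).
      - r Hy2. reflexivity.
      - rewrite Q. r Hz1. reflexivity. }
    assert (R2 : m (star x) x = m (star x) y).
    { pose proof (f_equal (fun F => F (m (star x) y)) H4) as Q. simpl in Q. NH Q.
      via (m (m (m (star x) y) (star x)) x).
      - r Hy2. reflexivity.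
      - rewrite Q. r Hz1. reflexivity. }
    via (m (m x (star x)) x).
    + r Hx1. reflexivity.
    + r R1. r R2. r Hy1. reflexivity.
  -
    intro x. unfold lsd_carrier, fmap, actK, actA, actB. simpl.
    set (t := cls m x). set (eps := mTt t (invTt star t)).
    destruct (G_idem_tt AT IT t) as [Ie _]. fold eps in Ie.
    assert (Et : t = cls m x) by reflexivity.
    assert (Eeps : eps = cls m (m x (star x))).
    { unfold eps, t. rewrite inv_cls by auto. apply mT_cls; auto. }
    f_equal; f_equal.
    + exact Ie.
    + apply XR_eq. simpl. apply functional_extensionality; intro k.
      rewrite Ie. pose proof (gT_idem A star hs eps) as Ig.
      assert (E : cls m (gT star eps) = cls m (m x (star x))).
      { rewrite gT_cls by auto. rewrite (G_inv_idem IT Ie). rewrite Ie. exact Eeps. }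
      N. r (LemG' A nb oc R Ig (isinv_idr A (hs x)) E (m x (star x)) k). destruct (hs x) as [Hx1 _]. r Hx1. reflexivity.
    + unfold eps. apply (proj1 IT).
    + apply XL_eq. simpl. apply functional_extensionality; intro k.
      unfold eps. rewrite (proj1 (proj1 IT t)). pose proof (gT_idem A star hs t) as Ig.
      assert (E : cls m (gT star t) = cls m (m (star x) x)).
      { rewrite gT_cls by auto. unfold t. rewrite inv_cls by auto. apply mT_cls; auto. }
      N. r (LemG' A nb oc R Ig (isinv_idl A (hs x)) E k (m (star x) x)). destruct (hs x) as [_ Hx2]. r Hx2. reflexivity.
  -
    intros x y. unfold fmap, lsd_mul, mK, actK, actA, actB. simpl.
    rewrite (mT_cls A nb oc R x y).
    set (t := cls m (m x y)). set (eps := mTt t (invTt star t)).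
    assert (Key : mTt eps (mTt (cls m x) (invTt star (cls m x))) = eps).
    { unfold eps, t. rewrite <- (mT_cls A nb oc R x y). apply TL3; auto. }
    rewrite Key.
    destruct (G_idem_tt AT IT t) as [Ie _]. fold eps in Ie.
    assert (Eeps : eps = cls m (m (m x y) (star (m x y)))).
    { unfold eps, t. rewrite inv_cls by auto. apply mT_cls; auto. }
    f_equal; f_equal; f_equal.
    + apply XR_eq. simpl. apply functional_extensionality; intro k.
      pose proof (gT_idem A star hs eps) as Ig.
      assert (E : cls m (gT star eps) = cls m (m (m x y) (star (m x y)))).
      { rewrite gT_cls by auto. rewrite (G_inv_idem IT Ie). rewrite Ie. exact Eeps. }
      symmetry. N. r (LemG' A nb oc R Ig (isinv_idr A (hs (m x y))) E (m x (star x)) k).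
      destruct (hs x) as [Hx1 _]. r Hx1. reflexivity.
    + apply XL_eq. simpl. apply functional_extensionality; intro k.
      pose proof (gT_idem A star hs t) as Ig.
      assert (E : cls m (gT star t) = cls m (m (star (m x y)) (m x y))).
      { rewrite gT_cls by auto. unfold t. rewrite inv_cls by auto. apply mT_cls; auto. }
      symmetry. N. r (LemG' A nb oc R Ig (isinv_idl A (hs (m x y))) E k (m (star y) y)).
      destruct (hs y) as [Hy1 _]. r Hy1. reflexivity.
Qed.

Lemma backward S (m : S -> S -> S) (A : associative_op m) (R : regular m)
  K T (mK0 : K -> K -> K) (mT : T -> T -> T) (inv : T -> T) (act : T -> K -> K)
  (AK : associative_op mK0) (RB : rectangular_band mK0) (AT : associative_op mT)
  (IT : inverse_semigroup_with mT inv) (SA : semigroup_action mK0 mT act)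
  (f : S -> K * T) (inj : forall x y, f x = f y -> x = y)
  (car : forall x, lsd_carrier mT inv act (f x))
  (hom : forall x y, f (m x y) = lsd_mul mK0 mT inv act (f x) (f y)) :
  generalized_inverse m.
Proof.
  destruct RB as [RB1 RB2]. destruct SA as [SE SC].
  set (Ip := fun p : K * T => idempotent mT (snd p) /\ act (snd p) (fst p) = fst p).
  set (M := fun p q : K * T => (mK0 (act (snd q) (fst p)) (act (snd p) (fst q)), mT (snd p) (snd q))).
  assert (mulI : forall p q, Ip p -> Ip q -> lsd_mul mK0 mT inv act p q = M p q /\ Ip (M p q)).
  { intros [a t] [b u] [It Ha] [Iu Hb]. simpl in *.
    pose proof (G_idem_prod AT IT It Iu) as Itu.
    pose proof (G_comm AT IT It Iu) as C.
    assert (E1 : act (mT t u) a = act u a) by (rewrite C, SC, Ha; reflexivity).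
    assert (E2 : act (mT t u) b = act t b) by (rewrite SC, Hb; reflexivity).
    unfold lsd_mul, M; simpl. rewrite (G_inv_idem IT Itu). unfold idempotent in Itu. rewrite Itu, E1.
    split; [reflexivity|]. split; [exact Itu|]. simpl.
    rewrite SE, <- !SC.
    assert (E3 : mT (mT t u) u = mT t u) by (rewrite <- AT; unfold idempotent in Iu; rewrite Iu; reflexivity).
    assert (E4 : mT (mT t u) t = mT t u) by (rewrite C, <- AT; unfold idempotent in It; rewrite It; reflexivity).
    rewrite E3, E4, E1, E2. reflexivity. }
  assert (Ie : forall e, idempotent m e -> Ip (f e)).
  { intros e He. pose proof (hom e e) as H. unfold idempotent in He. rewrite He in H.
    pose proof (car e) as Ce. unfold lsd_carrier in Ce.
    destruct (f e) as [a t]. simpl in *. unfold lsd_mul in H. simpl in H.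
    injection H as _ Ht. symmetry in Ht.
    assert (It : idempotent mT t) by exact Ht.
    split; [exact It|]. rewrite (G_inv_idem IT It) in Ce. rewrite Ht in Ce. exact Ce. }
  assert (Ipf : forall e g, idempotent m e -> idempotent m g -> f (m e g) = M (f e) (f g) /\ Ip (f (m e g))).
  { intros e g He Hg. rewrite hom. destruct (mulI _ _ (Ie e He) (Ie g Hg)) as [E1 E2]. rewrite E1. auto. }
  assert (OC : forall e g, idempotent m e -> idempotent m g -> idempotent m (m e g)).
  { intros e g He Hg. unfold idempotent. apply inj. rewrite hom.
    destruct (Ipf e g He Hg) as [_ HI]. destruct (mulI _ _ HI HI) as [E _]. rewrite E.
    destruct (f (m e g)) as [a t]. destruct HI as [It Ha]. unfold M; simpl in *.
    unfold idempotent in It. rewrite Ha, It, RB1. reflexivity. }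
  split; [split; [exact R | exact OC] |].
  intros e g h He Hg Hh. apply inj.
  assert (HH : forall x y z, idempotent m x -> idempotent m y -> idempotent m z ->
            f (m (m (m x y) z) x) = M (M (M (f x) (f y)) (f z)) (f x)).
  { intros x y z Hx Hy Hz.
    destruct (Ipf x y Hx Hy) as [E1 I1].
    assert (Ixyz := OC _ _ (OC _ _ Hx Hy) Hz).
    destruct (Ipf (m x y) z (OC _ _ Hx Hy) Hz) as [E2 I2].
    destruct (Ipf (m (m x y) z) x Ixyz Hx) as [E3 I3].
    rewrite E3, E2, E1. reflexivity. }
  rewrite !HH by auto.
  pose proof (Ie e He) as [It Ha]. pose proof (Ie g Hg) as [Iu Hb]. pose proof (Ie h Hh) as [Iv Hc].
  destruct (f e) as [a t], (f g) as [b u], (f h) as [c v]. unfold M; simpl in *.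
  repeat (rewrite SE || rewrite RB2). rewrite <- !SC.
  pose proof (G_comm AT IT Iu Iv) as C.
  assert (E : mT (mT t u) v = mT (mT t v) u) by (rewrite <- !AT, C; reflexivity).
  rewrite E. f_equal; try (rewrite C; reflexivity).
Qed.

Theorem proposition6p2 (S : Type) (mS : S -> S -> S)
  (assocS : associative_op mS) (regS : regular mS) :
  generalized_inverse mS <->
  exists (K T : Type) (mK : K -> K -> K) (mT : T -> T -> T)
         (inv : T -> T) (act : T -> K -> K),
    associative_op mK /\ rectangular_band mK /\
    associative_op mT /\ inverse_semigroup_with mT inv /\
    semigroup_action mK mT act /\
    exists f : S -> K * T,
      (forall x y, f x = f y -> x = y) /\
      (forall x, lsd_carrier mT inv act (f x)) /\
      (forall x y, f (mS x y) = lsd_mul mK mT inv act (f x) (f y)).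
Proof.
  split.
  - intros [[_ OC] NB].
    set (star := fun a => proj1_sig (constructive_indefinite_description _ (reg_inv assocS regS a))).
    assert (hs : forall a, isinv mS a (star a)).
    { intro a. unfold star. destruct (constructive_indefinite_description _ _) as [z Hz]. exact Hz. }
    exact (forward assocS NB OC regS star hs).
  - intros [K [T [mK [mT [inv [act [AK [RB [AT [IT [SA [f [inj [car hom]]]]]]]]]]]]]].
    exact (backward assocS regS AK RB AT IT SA f inj car hom).
Qed.
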